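(* Let $I$ be an interpretation of bounded range, and let $\mathcal{C}$ be a class of (possibly colored) graphs of locally almost bounded degree. Then $I(\mathcal{C})=\{I(G):G\in\mathcal{C}\}$ is locally almost near-covered.
   Context: Graphs are finite, simple, and may be colored by unary predicates; graph-theoretic properties refer to the underlying graph. $N^G(v)$ is the set of neighbors of $v$; $N_r^G(v)$ is the closed $r$-neighborhood of $v$; $\mathrm{dist}_G$ is graph distance. A class $\mathcal{C}$ has locally almost bounded degree if there exist $f,d:\mathbb{N}\to\mathbb{N}$ such that for every $r$, every $G\in\mathcal{C}$ and every $v\in V(G)$, $N_r^G(v)$ contains at most $f(r)$ vertices of degree larger than $d(r)$ in $G$. An interpretation $I=(\psi,\delta)$ consists of first-order formulas $\psi(x,y)$, $\delta(x)$ in the signature of (colored) graphs, $\psi$ symmetric and irreflexive; $I(G)$ has vertex set $\{v:G\models\delta(v)\}$ and edges $uv$ ($u\ne v$) with $G\models\psi(u,v)$. $\psi$ has range $b$ if for all $G$ and $u,v$, $\mathrm{dist}_G(u,v)>b$ implies $G\not\models\psi(u,v)$; $I$ has bounded range if $\psi$ has range $b$ for some $b$. Two vertices are $k$-near-twins in $G$ if $|N^G(u)\,\Delta\,N^G(v)|\le k$. $G$ is $(k,m)$-near-covered if every set of pairwise non-$k$-near-twin vertices has size at most $m$. A class is locally almost near-covered if there exist $k,m:\mathbb{N}\to\mathbb{N}$ such that for every $r$, every graph $G$ in the class and every $v\in V(G)$, $G[N_r^G(v)]$ is $(k(r),m(r))$-near-covered. *)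

(* Defs.v *)
From mathcomp Require Import all_boot.
Set Implicit Arguments. Unset Strict Implicit. Unset Printing Implicit Defensive.

Fixpoint ball (T : finType) (e : rel T) (r : nat) (v : T) : {set T} :=
  match r with
  | 0 => [set v]
  | r'.+1 => let B := ball e r' v in B :|: [set u | [exists w in B, e w u]]
  end.

Definition nbh (T : finType) (e : rel T) (v : T) : {set T} := [set u | e v u].
Definition degree (T : finType) (e : rel T) (v : T) : nat := #|nbh e v|.

Definition nbh_in (T : finType) (e : rel T) (S : {set T}) (u : T) : {set T} :=
  [set w in S | e u w].

Definition near_twins (T : finType) (e : rel T) (S : {set T}) (k : nat) (u w : T) : bool :=
  #|(nbh_in e S u :\: nbh_in e S w) :|: (nbh_in e S w :\: nbh_in e S u)| <= k.

Definition near_covered (T : finType) (e : rel T) (S : {set T}) (k m : nat) : Prop :=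
  forall X : {set T}, X \subset S ->
    {in X &, forall u w, u != w -> ~~ near_twins e S k u w} -> #|X| <= m.

Record graph := Graph { gvert : finType; gadj : rel gvert }.

Definition loc_almost_near_covered (D : graph -> Prop) : Prop :=
  exists k m : nat -> nat, forall (r : nat) (H : graph), D H ->
    forall v : gvert H, near_covered (@gadj H) (ball (@gadj H) r v) (k r) (m r).

Record cgraph := CGraph {
  cvert : finType;
  cadj : rel cvert;
  cadj_sym : symmetric cadj;
  cadj_irr : irreflexive cadj;
  ccol : nat -> pred cvert }.

Definition loc_almost_bounded_degree (C : cgraph -> Prop) : Prop :=
  exists f d : nat -> nat, forall (r : nat) (G : cgraph), C G ->
    forall v : cvert G,
      #|[set u in ball (@cadj G) r v | d r < degree (@cadj G) u]| <= f r.

Inductive form :=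
| FEq  of nat & nat
| FAdj of nat & nat
| FCol of nat & nat          (* P_i(x) *)
| FNot of form
| FAnd of form & form
| FEx  of nat & form.

Fixpoint fv (phi : form) : seq nat :=
  match phi with
  | FEq x y | FAdj x y => [:: x; y]
  | FCol _ x => [:: x]
  | FNot p => fv p
  | FAnd p q => fv p ++ fv q
  | FEx x p => [seq y <- fv p | y != x]
  end.

Fixpoint sat (G : cgraph) (rho : nat -> cvert G) (phi : form) : bool :=
  match phi with
  | FEq x y => rho x == rho y
  | FAdj x y => cadj (rho x) (rho y)
  | FCol i x => @ccol G i (rho x)
  | FNot p => ~~ sat rho p
  | FAnd p q => sat rho p && sat rho q
  | FEx x p => [exists a : cvert G, sat (fun n => if n == x then a else rho n) p]
  end.

(* evaluation of psi(x,y) with x := variable 0, y := variable 1 *)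
Definition psi_at (psi : form) (G : cgraph) (u v : cvert G) : bool :=
  sat (fun n => if n == 1 then v else u) psi.
(* evaluation of delta(x) with x := variable 0 *)
Definition delta_at (delta : form) (G : cgraph) (u : cvert G) : bool :=
  sat (fun _ => u) delta.

Definition is_interpretation (psi delta : form) : Prop :=
  [/\ all (fun n => n < 2) (fv psi), all (fun n => n < 1) (fv delta),
      (forall (G : cgraph) (u v : cvert G), psi_at psi u v = psi_at psi v u) &
      (forall (G : cgraph) (u : cvert G), ~~ psi_at psi u u)].

Definition has_range (psi : form) (b : nat) : Prop :=
  forall (G : cgraph) (u v : cvert G), u \notin ball (@cadj G) b v -> ~~ psi_at psi u v.

Definition ivert (delta : form) (G : cgraph) : finType :=
  {u : cvert G | delta_at delta u}.
Definition iadj (psi delta : form) (G : cgraph) : rel (ivert delta G) :=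
  fun u v => (val u != val v) && psi_at psi (val u) (val v).
Definition interp_graph (psi delta : form) (G : cgraph) : graph :=
  Graph (@iadj psi delta G).

Definition interp_class (psi delta : form) (C : cgraph -> Prop) : graph -> Prop :=
  fun H => exists G, C G /\ H = interp_graph psi delta G.

(* Main.v *)
Require Import Defs.
From mathcomp Require Import all_boot zify.
Set Implicit Arguments. Unset Strict Implicit. Unset Printing Implicit Defensive.

Section Balls.
Variables (T : finType) (e : rel T).

Lemma ballS r v y : y \in ball e r v -> y \in ball e r.+1 v.
Proof. by move=> H /=; rewrite inE H. Qed.

Lemma ballSP r v y : reflect (y \in ball e r v \/ exists2 w, w \in ball e r v & e w y)
   (y \in ball e r.+1 v).
Proof.
rewrite /= inE in_set; apply: (iffP orP) => [[->|/existsP[w /andP[??]]]|[->|[w ??]]].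
- by left.
- by right; exists w.
- by left.
- by right; apply/existsP; exists w; apply/andP.
Qed.

Lemma ball_step r v y z : y \in ball e r v -> e y z -> z \in ball e r.+1 v.
Proof. by move=> Hy Hyz; apply/ballSP; right; exists y. Qed.

Lemma ball0 v y : (y \in ball e 0 v) = (y == v).
Proof. by rewrite /= inE. Qed.

Lemma ball_center r v : v \in ball e r v.
Proof. by elim: r => [|r IH]; [rewrite ball0|apply: ballS]. Qed.

Lemma ball_mono r s v y : r <= s -> y \in ball e r v -> y \in ball e s v.
Proof.
move=> /subnK <-; elim: (s - r) => [//|n IH] H.
by rewrite addSn; apply: ballS; apply: IH.
Qed.

Lemma ball_trans r s x y z : y \in ball e r x -> z \in ball e s y -> z \in ball e (r + s) x.
Proof.
move=> Hy; elim: s z => [|s IH] z; first by rewrite ball0 addn0 => /eqP->.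
case/ballSP => [/IH|[w /IH Hw Hwz]]; rewrite addnS; first exact: ballS.
exact: ball_step Hw Hwz.
Qed.

Lemma ball_sym r x y : symmetric e -> y \in ball e r x -> x \in ball e r y.
Proof.
move=> se; elim: r y => [|r IH] y; first by rewrite !ball0 eq_sym.
case/ballSP => [/IH/ballS //|[w /IH Hw Hwy]].
have Hw1 : w \in ball e 1 y by apply: (@ball_step 0); [exact: ball_center|rewrite se].
by have := ball_trans Hw1 Hw; rewrite add1n.
Qed.

Lemma ball_rel_mono (e' : rel T) r v y : (forall a b, e a b -> e' a b) ->
  y \in ball e r v -> y \in ball e' r v.
Proof.
move=> He; elim: r y => [|r IH] y; first by rewrite !ball0.
case/ballSP => [/IH H|[w /IH Hw Hwy]]; rewrite /= inE; first by rewrite H.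
by rewrite in_set; apply/orP; right; apply/existsP; exists w; rewrite Hw He.
Qed.

Lemma ball_ind_prop (P : T -> Prop) r v : P v -> (forall a b, P a -> e a b -> P b) ->
  forall y, y \in ball e r v -> P y.
Proof.
move=> Pv Pe; elim: r => [|r IH] y; first by rewrite ball0 => /eqP->.
by case/ballSP => [/IH //|[w /IH Hw Hwy]]; apply: Pe Hwy.
Qed.

Lemma card_bigcup_le (I : finType) (P : {pred I}) (F : I -> {set T}) :
  #|\bigcup_(i in P) F i| <= \sum_(i in P) #|F i|.
Proof.
elim/big_rec2: _ => [|i A n _ HA]; first by rewrite cards0.
apply: leq_trans (leq_card_setU _ _) _.
exact: leq_add.
Qed.

Lemma ball_card D t x : (forall y, y \in ball e t x -> #|nbh e y| <= D) ->
  #|ball e t x| <= D.+1 ^ t.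
Proof.
elim: t => [|t IH] Hd; first by rewrite /= cards1.
have IH' : #|ball e t x| <= D.+1 ^ t by apply: IH => y /ballS; apply: Hd.
rewrite /=; apply: leq_trans (leq_card_setU _ _) _.
have -> : [set u | [exists w in ball e t x, e w u]] = \bigcup_(w in ball e t x) nbh e w.
  apply/setP => u; rewrite inE; apply/existsP/bigcupP => [[w /andP[??]]|[w ??]].
    by exists w; rewrite // inE.
  by exists w; apply/andP; split; rewrite // -(in_set (e w)).
apply: leq_trans (leq_add (leqnn _) (card_bigcup_le _ _)) _.
have HS : \sum_(w in ball e t x) #|nbh e w| <= \sum_(w in ball e t x) D.
  by apply: leq_sum => w Hw; apply: Hd; apply: ballS.
apply: leq_trans (leq_add (leqnn _) HS) _.
rewrite sum_nat_const expnS.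
have : #|ball e t x| * D.+1 <= D.+1 ^ t * D.+1 by rewrite leq_mul2r IH' orbT.
nia.
Qed.

End Balls.

Definition eH (G : cgraph) (Hs : {set cvert G}) : rel (cvert G) :=
  fun a b => [&& cadj a b, a \notin Hs & b \notin Hs].

Record gmap (G : cgraph) (Hs : {set cvert G}) (rm CM : nat) (x y : cvert G)
  (s s' : cvert G -> cvert G) : Prop := GMap {
 gm_in : forall a, a \in ball (eH Hs) rm x -> s a \in ball (eH Hs) rm y;
 gm_inv : forall a, a \in ball (eH Hs) rm x -> s' (s a) = a;
 gm_dist : forall a t, a \in ball (eH Hs) rm x -> t <= rm ->
    (a \in ball (eH Hs) t x) = (s a \in ball (eH Hs) t y);
 gm_col : forall a c, a \in ball (eH Hs) rm x -> c < CM -> ccol c a = ccol c (s a);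
 gm_h : forall a h, a \in ball (eH Hs) rm x -> h \in Hs -> cadj a h = cadj (s a) h;
 gm_adj : forall a a', a \in ball (eH Hs) rm x -> a' \in ball (eH Hs) rm x ->
    cadj a a' = cadj (s a) (s a') }.

Fixpoint qd (phi : form) : nat :=
  match phi with
  | FNot p => qd p | FAnd p q => maxn (qd p) (qd q) | FEx _ p => (qd p).+1 | _ => 0 end.
Fixpoint cm (phi : form) : nat :=
  match phi with
  | FCol i _ => i.+1
  | FNot p => cm p | FAnd p q => maxn (cm p) (cm q) | FEx _ p => cm p | _ => 0 end.

Lemma eH_sym G Hs : symmetric (@eH G Hs).
Proof.
by move=> a b; rewrite /eH cadj_sym; case: (a \in Hs); case: (b \in Hs); rewrite /= ?andbF.
Qed.

Lemma ballH G (Hs : {set cvert G}) x t a : x \notin Hs -> a \in ball (eH Hs) t x -> a \notin Hs.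
Proof.
move=> hx; apply: (@ball_ind_prop _ _ (fun a => a \notin Hs)) => // u w _ /and3P[] //.
Qed.

Section Swap.
Variable G : cgraph.
Local Notation V := (cvert G).
Variables (Hs : {set V}) (rm CM : nat) (x1 x2 : V) (sg sg' : V -> V).
Hypotheses (hx1 : x1 \notin Hs) (hx2 : x2 \notin Hs)
  (far : x2 \notin ball (eH Hs) (rm + rm).+1 x1)
  (g1 : gmap Hs rm CM x1 x2 sg sg') (g2 : gmap Hs rm CM x2 x1 sg' sg).
Local Notation E := (eH Hs).

Lemma disj s1 s2 a : a \in ball E s1 x1 -> a \in ball E s2 x2 -> s1 + s2 <= (rm + rm).+1 -> False.
Proof.
move=> h1 h2 hs; have h3 := ball_sym (@eH_sym G Hs) h2.
have := ball_mono hs (ball_trans h1 h3); by rewrite (negbTE far).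
Qed.

Lemma adj_out x l h a a' : x \notin Hs -> l < h -> a \in ball E l x -> a' \notin ball E h x ->
  a' \notin Hs -> cadj a a' = false.
Proof.
move=> hx lh ha ha' hH; apply/negP => hc.
have he : E a a' by rewrite /eH hc (ballH hx ha) hH.
by move: ha'; rewrite (ball_mono lh (ball_step ha he)).
Qed.

Lemma key1 x y s s' l h a a' : gmap Hs rm CM x y s s' -> x \notin Hs -> y \notin Hs ->
  l < h -> h <= rm -> a \in ball E l x -> a' \notin ball E h x -> a' \notin ball E h y ->
  cadj (s a) a' = cadj a a'.
Proof.
move=> gm hx hy lh hr ha o1 o2.
have hal : l <= rm by apply: leq_trans (ltnW lh) hr.
have har : a \in ball E rm x by apply: ball_mono ha.
case hH : (a' \in Hs); first by rewrite (gm_h gm har hH).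
have hsa : s a \in ball E l y by rewrite -(gm_dist gm har hal).
by rewrite (adj_out hy lh hsa o2 (negbT hH)) (adj_out hx lh ha o1 (negbT hH)).
Qed.

Lemma key2 l a a' : l <= rm -> a \in ball E l x1 -> a' \in ball E l x2 -> cadj a a' = false.
Proof.
move=> hl h1 h2; apply/negP => hc.
have he : E a a' by rewrite /eH hc (ballH hx1 h1) (ballH hx2 h2).
by apply: (disj (ball_step h1 he) h2); lia.
Qed.

Definition tau l a := if a \in ball E l x1 then sg a else if a \in ball E l x2 then sg' a else a.
Definition safe l h a := ((a \in ball E l x1) || (a \notin ball E h x1)) &&
                         ((a \in ball E l x2) || (a \notin ball E h x2)).

Lemma tau1 l a : a \in ball E l x1 -> tau l a = sg a.
Proof. by rewrite /tau => ->. Qed.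
Lemma tau2 l a : l <= rm -> a \in ball E l x2 -> tau l a = sg' a.
Proof.
move=> hl h; rewrite /tau h; case: ifP => // h1.
by exfalso; apply: (disj h1 h); lia.
Qed.
Lemma tau3 l a : a \notin ball E l x1 -> a \notin ball E l x2 -> tau l a = a.
Proof. by rewrite /tau => /negbTE-> /negbTE->. Qed.

Lemma sg_l l a : l <= rm -> a \in ball E l x1 -> sg a \in ball E l x2.
Proof. by move=> hl h; rewrite -(gm_dist g1 (ball_mono hl h) hl). Qed.
Lemma sg'_l l a : l <= rm -> a \in ball E l x2 -> sg' a \in ball E l x1.
Proof. by move=> hl h; rewrite -(gm_dist g2 (ball_mono hl h) hl). Qed.

Lemma not1 s a : s <= rm -> a \in ball E s x2 -> forall t, t <= rm -> a \notin ball E t x1.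
Proof. by move=> hs h t ht; apply/negP => h'; apply: (disj h' h); lia. Qed.

Lemma tauK l a : l <= rm -> tau l (tau l a) = a.
Proof.
move=> hl; case h1 : (a \in ball E l x1).
  rewrite (tau1 h1) (tau2 hl (sg_l hl h1)). apply: (gm_inv g1). exact: (ball_mono hl h1).
case h2 : (a \in ball E l x2).
  rewrite (tau2 hl h2) (tau1 (sg'_l hl h2)); apply: (gm_inv g2); exact: (ball_mono hl h2).
by rewrite !tau3 ?h1 ?h2.
Qed.

Lemma tau_col l a c : l <= rm -> c < CM -> ccol c (tau l a) = ccol c a.
Proof.
move=> hl hc; case h1 : (a \in ball E l x1).
  by rewrite tau1 // (gm_col g1 (ball_mono hl h1) hc).
case h2 : (a \in ball E l x2).
  by rewrite tau2 // (gm_col g2 (ball_mono hl h2) hc).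
by rewrite !tau3 ?h1 ?h2.
Qed.

Lemma safeP l h a : l < h -> h <= rm -> safe l h a ->
  [\/ a \in ball E l x1, a \in ball E l x2 | (a \notin ball E h x1) && (a \notin ball E h x2)].
Proof.
move=> lh hr /andP[/orP[?|o1] /orP[?|o2]]; [by constructor 1|by constructor 1|by constructor 2|].
by constructor 3; rewrite o1 o2.
Qed.

Lemma tau_safe l h a : l < h -> h <= rm -> safe l h a -> safe l h (tau l a).
Proof.
move=> lh hr hs; have hl : l <= rm by lia.
case/(safeP lh hr): hs => [h1|h2|/andP[o1 o2]].
- rewrite tau1 // /safe (sg_l hl h1) /= andbT.
  by apply/orP; right; apply: (not1 hl (sg_l hl h1) hr).
- rewrite tau2 // /safe (sg'_l hl h2) /=.
  apply/orP; right; apply/negP => h'; apply: (disj (sg'_l hl h2) h'); lia.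
- have n1 : a \notin ball E l x1 by apply: contra o1; apply: ball_mono; lia.
  have n2 : a \notin ball E l x2 by apply: contra o2; apply: ball_mono; lia.
  by rewrite tau3 // /safe o1 o2 !orbT.
Qed.

Lemma tau_adj l h a a' : l < h -> h <= rm -> safe l h a -> safe l h a' ->
  cadj (tau l a) (tau l a') = cadj a a'.
Proof.
move=> lh hr hs hs'; have hl : l <= rm by lia.
have key1' : forall b b', b \in ball E l x1 -> b' \notin ball E h x1 -> b' \notin ball E h x2 ->
   cadj (sg b) b' = cadj b b'.
  by move=> b b'; apply: (key1 g1).
have key1'' : forall b b', b \in ball E l x2 -> b' \notin ball E h x2 -> b' \notin ball E h x1 ->
   cadj (sg' b) b' = cadj b b'.
  by move=> b b'; apply: (key1 g2).
have out : forall b, b \notin ball E h x1 -> b \notin ball E h x2 -> tau l b = b.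
  move=> b o1 o2; apply: tau3; [apply: contra o1|apply: contra o2]; apply: ball_mono; lia.
case/(safeP lh hr): hs => [h1|h2|/andP[o1 o2]];
 case/(safeP lh hr): hs' => [h1'|h2'|/andP[o1' o2']].
- by rewrite (tau1 h1) (tau1 h1') -(gm_adj g1 (ball_mono hl h1) (ball_mono hl h1')).
- rewrite (tau1 h1) (tau2 hl h2') [RHS](key2 hl h1 h2') cadj_sym.
  exact: key2 hl (sg'_l hl h2') (sg_l hl h1).
- by rewrite (tau1 h1) (out _ o1' o2') key1'.
- rewrite (tau1 h1') (tau2 hl h2) [RHS]cadj_sym (key2 hl h1' h2).
  exact: key2 hl (sg'_l hl h2) (sg_l hl h1').
- by rewrite (tau2 hl h2) (tau2 hl h2') -(gm_adj g2 (ball_mono hl h2) (ball_mono hl h2')).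
- by rewrite (tau2 hl h2) (out _ o1' o2') key1''.
- by rewrite (tau1 h1') (out _ o1 o2) cadj_sym key1' // cadj_sym.
- by rewrite (tau2 hl h2') (out _ o1 o2) cadj_sym key1'' // cadj_sym.
- by rewrite (out _ o1 o2) (out _ o1' o2').
Qed.

Lemma tau_shrink l h l' h' a : l <= l' -> l' < h' -> h' <= h -> h <= rm -> safe l h a ->
  safe l' h' a && (tau l' a == tau l a).
Proof.
move=> ll l'h' hh hr hs; have lh : l < h by lia.
have hl : l <= rm by lia.
have hl' : l' <= rm by lia.
case/(safeP lh hr): hs => [h1|h2|/andP[o1 o2]].
- have h1' : a \in ball E l' x1 by apply: ball_mono h1.
  rewrite (tau1 h1) (tau1 h1') eqxx andbT /safe h1' /=.
  by apply/orP; right; apply/negP => h2; apply: (disj h1 h2); lia.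
- have h2' : a \in ball E l' x2 by apply: ball_mono h2.
  rewrite (tau2 hl h2) (tau2 hl' h2') eqxx andbT /safe h2' /= andbT.
  by apply/orP; right; apply/negP => h1; apply: (disj h1 h2); lia.
- have n1 : forall t, t <= h -> a \notin ball E t x1 by move=> t ht; apply: contra o1; apply: ball_mono.
  have n2 : forall t, t <= h -> a \notin ball E t x2 by move=> t ht; apply: contra o2; apply: ball_mono.
  rewrite (tau3 (n1 l' _) (n2 l' _)) ?(tau3 (n1 l _) (n2 l _)) ?eqxx ?andbT; try lia.
  by rewrite /safe n1 ?n2 ?orbT //; lia.
Qed.

Lemma shell l h k a : 0 < k -> l + 3 * k <= h ->
  exists2 l', l <= l' & (l' + k <= h) && safe l' (l' + k) a.
Proof.
move=> k0 hk.
have mono : forall x s t, s <= t -> a \in ball E s x -> a \in ball E t x.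
  by move=> x s t st; apply: ball_mono.
have m1 := mono x1 l (l + k) (leq_addr _ _).
have m2 := mono x1 (l + k) (l + k + k) (leq_addr _ _).
have m3 := mono x1 (l + k + k) (l + k + k + k) (leq_addr _ _).
have m1' := mono x2 l (l + k) (leq_addr _ _).
have m2' := mono x2 (l + k) (l + k + k) (leq_addr _ _).
have m3' := mono x2 (l + k + k) (l + k + k + k) (leq_addr _ _).
have b1 : l + k <= h by lia.
have b2 : l + k + k <= h by lia.
have b3 : l + k + k + k <= h by lia.
rewrite /safe.
move: m1 m2 m3 m1' m2' m3'.
case e1: (a \in ball E l x1); case e2: (a \in ball E (l + k) x1);
case e3: (a \in ball E (l + k + k) x1); case e4: (a \in ball E (l + k + k + k) x1);
case e5: (a \in ball E l x2); case e6: (a \in ball E (l + k) x2);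
case e7: (a \in ball E (l + k + k) x2); case e8: (a \in ball E (l + k + k + k) x2) => //= m1 m2 m3 m1' m2' m3';
 try (by exists l; rewrite ?leqnn ?b1 ?e1 ?e2 ?e5 ?e6);
 try (by exists (l + k); rewrite ?leq_addr ?b2 ?e2 ?e3 ?e6 ?e7);
 try (by exists (l + k + k); rewrite ?b3 -?addnA ?leq_addr ?addnA ?e3 ?e4 ?e7 ?e8).
all: try by (have := m1 erefl).
all: try by (have := m2 erefl).
all: try by (have := m3 erefl).
all: try by (have := m1' erefl).
all: try by (have := m2' erefl).
all: try by (have := m3' erefl).
Qed.

Lemma sat_tau (phi : form) : forall l h (al be : nat -> V), l < h -> h <= rm ->
  3 ^ (qd phi) <= h - l -> cm phi <= CM ->
  (forall n, n \in fv phi -> safe l h (al n) && (be n == tau l (al n))) ->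
  sat al phi = sat be phi.
Proof.
elim: phi => [x y|x y|i x|p IH|p IHp q IHq|x p IH] l h al be lh hr hq hc hinv /=.
- have hy : y \in fv (FEq x y) by rewrite !inE eqxx orbT.
  have /andP[_ /eqP ->] := hinv x (mem_head _ _).
  have /andP[_ /eqP ->] := hinv y hy.
  have hl : l <= rm by lia.
  have canc : cancel (tau l) (tau l) by move=> a; apply: tauK.
  by rewrite (inj_eq (can_inj canc)).
- have hy : y \in fv (FAdj x y) by rewrite !inE eqxx orbT.
  have /andP[sx /eqP ->] := hinv x (mem_head _ _).
  have /andP[sy /eqP ->] := hinv y hy.
  by rewrite (tau_adj lh hr sx sy).
- have /andP[sx /eqP ->] := hinv x (mem_head _ _).
  by rewrite tau_col //; lia.
- by rewrite (IH l h al be).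
- rewrite /= in hq hc.
  rewrite (IHp l h al be) ?(IHq l h al be) //.
  + apply: leq_trans hq; apply: leq_pexp2l => //; exact: leq_maxr.
  + by apply: leq_trans hc; exact: leq_maxr.
  + by move=> n hn; apply: hinv; rewrite mem_cat hn orbT.
  + apply: leq_trans hq; apply: leq_pexp2l => //; exact: leq_maxl.
  + by apply: leq_trans hc; exact: leq_maxl.
  + by move=> n hn; apply: hinv; rewrite mem_cat hn.
- rewrite /= expnS in hq hc.
  set k := 3 ^ qd p in hq.
  have k0 : 0 < k by rewrite expn_gt0.
  have hk : l + 3 * k <= h by lia.
  have hinv' : forall l' (a b : V), l <= l' -> l' + k <= h -> safe l' (l' + k) a ->
      b = tau l' a ->
      forall n, n \in fv p -> safe l' (l' + k) ((fun m => if m == x then a else al m) n) &&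
        ((fun m => if m == x then b else be m) n ==
         tau l' ((fun m => if m == x then a else al m) n)).
    move=> l' a b ll' hl'k sa hb n hn /=; case: eqP => [_|/eqP nx]; first by rewrite sa hb eqxx.
    have /andP[s1 /eqP e1] : safe l h (al n) && (be n == tau l (al n)).
      by apply: hinv; rewrite mem_filter nx.
    have := tau_shrink (l' := l') (h' := l' + k) ll' _ hl'k hr s1.
    by rewrite e1 eq_sym; apply; lia.
  apply/existsP/existsP => [[a Ha]|[b Hb]].
  + have [l' ll' /andP[hl'k sa]] := shell a k0 hk.
    exists (tau l' a).
    rewrite -(IH l' (l' + k) _ _ _ _ _ _ (hinv' l' a (tau l' a) ll' hl'k sa erefl)) //; try lia.
  + have [l' ll' /andP[hl'k sb]] := shell b k0 hk.
    exists (tau l' b).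
    have sa := tau_safe (l := l') (h := l' + k) _ _ sb.
    rewrite (IH l' (l' + k) _ _ _ _ _ _ (hinv' l' (tau l' b) b ll' hl'k (sa _ _) _)) //; try lia.
    * by rewrite tauK //; lia.
Qed.
End Swap.

Definition cseq (G : cgraph) (Hs : {set cvert G}) rm (x : cvert G) :=
  enum (ball (eH Hs) rm x).

Definition code_t (N CM F rm : nat) : finType :=
  ('I_N.+1 * {ffun 'I_N * 'I_N -> bool} * {ffun 'I_N * 'I_CM -> bool}
   * {ffun 'I_N * 'I_F -> bool} * {ffun 'I_N * 'I_rm.+1 -> bool})%type.

Definition code (G : cgraph) (Hs : {set cvert G}) (rm CM N F : nat) (x : cvert G) :
  code_t N CM F rm :=
  let s := cseq Hs rm x in
  (inord (size s),
   [ffun ij : 'I_N * 'I_N => cadj (nth x s ij.1) (nth x s ij.2)],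
   [ffun ic : 'I_N * 'I_CM => ccol ic.2 (nth x s ic.1)],
   [ffun ih : 'I_N * 'I_F => cadj (nth x s ih.1) (nth x (enum Hs) ih.2)],
   [ffun it : 'I_N * 'I_rm.+1 => nth x s it.1 \in ball (eH Hs) it.2 x]).

Definition sgm (G : cgraph) (Hs : {set cvert G}) rm (x y a : cvert G) :=
  nth y (cseq Hs rm y) (index a (cseq Hs rm x)).

Lemma code_gmap (G : cgraph) (Hs : {set cvert G}) rm CM N F (x1 x2 : cvert G) :
  #|ball (eH Hs) rm x1| <= N -> #|ball (eH Hs) rm x2| <= N -> #|Hs| <= F ->
  code Hs rm CM N F x1 = code Hs rm CM N F x2 ->
  gmap Hs rm CM x1 x2 (sgm Hs rm x1 x2) (sgm Hs rm x2 x1).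
Proof.
move=> c1 c2 hF; rewrite /code => [[e0 e1 e2 e3 e4]].
set s1 := cseq Hs rm x1 in e0 e1 e2 e3 e4.
set s2 := cseq Hs rm x2 in e0 e1 e2 e3 e4.
have sz1 : size s1 = #|ball (eH Hs) rm x1| by rewrite cardE.
have sz2 : size s2 = #|ball (eH Hs) rm x2| by rewrite cardE.
have sz : size s1 = size s2.
  have := congr1 val e0; rewrite /= !inordK //; lia.
have P1 : forall a, a \in ball (eH Hs) rm x1 ->
   [/\ index a s1 < size s1, index a s1 < N & nth x1 s1 (index a s1) = a].
  move=> a ha; have hs : a \in s1 by rewrite mem_enum.
  split; [by rewrite index_mem| |by rewrite nth_index].
  by apply: leq_trans c1; rewrite -sz1 index_mem.
have S2 : forall i, i < size s1 -> nth x2 s2 i \in ball (eH Hs) rm x2.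
  by move=> i hi; rewrite -(mem_enum (ball (eH Hs) rm x2)) mem_nth // -sz.
have sgmE : forall a, sgm Hs rm x1 x2 a = nth x2 s2 (index a s1) by [].
split.
- move=> a /P1 [hi _ _]; rewrite sgmE; exact: S2.
- move=> a /P1 [hi _ ha]; rewrite sgmE {1}/sgm -/s1 -/s2 index_uniq ?enum_uniq //.
  by rewrite -sz.
- move=> a t /P1 [hi hN ha] ht.
  have := congr1 (fun f : {ffun 'I_N * 'I_rm.+1 -> bool} => f (Ordinal hN, Ordinal (ht : t < rm.+1))) e4.
  by rewrite !ffunE /= ha sgmE.
- move=> a c /P1 [hi hN ha] hc.
  have := congr1 (fun f : {ffun 'I_N * 'I_CM -> bool} => f (Ordinal hN, Ordinal hc)) e2.
  by rewrite !ffunE /= ha sgmE.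
- move=> a h /P1 [hi hN ha] hh.
  have hk : index h (enum Hs) < F.
    by apply: leq_trans hF; rewrite cardE index_mem mem_enum.
  have := congr1 (fun f : {ffun 'I_N * 'I_F -> bool} => f (Ordinal hN, Ordinal hk)) e3.
  by rewrite !ffunE /= ha sgmE !nth_index ?mem_enum.
- move=> a a' /P1 [hi hN ha] /P1 [hi' hN' ha'].
  have := congr1 (fun f : {ffun 'I_N * 'I_N -> bool} => f (Ordinal hN, Ordinal hN')) e1.
  by rewrite !ffunE /= ha ha' !sgmE.
Qed.

Lemma inj_card (A B : finType) (f : A -> B) (Z : {set A}) (Y : {set B}) :
  injective f -> (forall z, z \in Z -> f z \in Y) -> #|Z| <= #|Y|.
Proof.
move=> fi hZ; rewrite -(card_imset Z fi); apply: subset_leq_card.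
by apply/subsetP => y /imsetP[z hz ->]; apply: hZ.
Qed.

Lemma iball_sub psi delta b (G : cgraph) r (v u : ivert delta G) :
  has_range psi b -> u \in ball (@iadj psi delta G) r v ->
  val u \in ball (@cadj G) (r * b) (val v).
Proof.
move=> hb; elim: r u => [|r IH] u; first by rewrite !ball0 => /eqP->.
case/ballSP => [/IH h|[w /IH hw hwu]].
  by apply: ball_mono h; rewrite leq_mul2r leqnSn orbT.
move: hwu; rewrite /iadj => /andP[_ hp].
have h1 : val w \in ball (@cadj G) b (val u).
  by apply: contraTT hp; apply: hb.
have h2 := ball_sym (@cadj_sym G) h1.
by rewrite mulSn addnC; apply: ball_trans hw h2.
Qed.

Theorem lemma5p9 (psi delta : form) (C : cgraph -> Prop) :
  is_interpretation psi delta ->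
  (exists b : nat, has_range psi b) ->
  loc_almost_bounded_degree C ->
  loc_almost_near_covered (interp_class psi delta C).
Proof.
move=> [fvpsi _ psym pirr] [b hb] [f [d hfd]].
pose rm := 2 * 3 ^ qd psi. pose T := (rm + rm).+1.
pose R' r := r * b + T. pose N r := (d (R' r)).+1 ^ T. pose F r := f (R' r).
exists (fun r => N r + N r), (fun r => F r + #|code_t (N r) (cm psi) (F r) rm| * N r).
move=> r Hg [G [CG ->]] v /=.
rewrite /near_covered => X hXS hX.
set S := ball _ r v in hXS hX *.
set x0 := val v.
pose Hs := [set u in ball (@cadj G) (R' r) x0 | d (R' r) < degree (@cadj G) u].
have hF : #|Hs| <= F r by apply: hfd.
have hN : forall u, u \in S -> val u \notin Hs -> forall t, t <= T ->
    #|ball (eH Hs) t (val u)| <= N r.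
  move=> u hu hHu t ht.
  apply: leq_trans (ball_card _) _; last by apply: leq_pexp2l.
  move=> y hy.
  have yH : y \notin Hs by apply: ballH hy.
  have y1 : y \in ball (@cadj G) t (val u).
    by apply: ball_rel_mono hy => a c /and3P[].
  have y2 : y \in ball (@cadj G) (R' r) x0.
    apply: ball_mono (ball_trans (iball_sub hb hu) y1); rewrite /R'; lia.
  have : ~~ (d (R' r) < degree (@cadj G) y) by move: yH; rewrite inE y2.
  rewrite -leqNgt => hdeg; apply: leq_trans hdeg.
  by apply: subset_leq_card; apply/subsetP => z; rewrite !inE => /and3P[].
pose P := [set u : ivert delta G | val u \in Hs].
rewrite -(cardsID P X).
have h1 : #|X :&: P| <= F r.
  apply: leq_trans hF; apply: (inj_card (f := val)) => [|z]; first exact: val_inj.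
  by rewrite !inE => /andP[_].
apply: leq_add => //.
rewrite leqNgt; apply/negP => hbig.
pose cl c := [set u in X :\: P | code Hs rm (cm psi) (N r) (F r) (val u) == c].
have [c hc] : exists c, N r < #|cl c|.
  case: (boolP [exists c, N r < #|cl c|]) => [/existsP //|/existsPn hall].
  exfalso; move: hbig; apply/negP; rewrite -leqNgt.
  have sub : X :\: P \subset \bigcup_(c in predT) cl c.
    apply/subsetP => u hu; apply/bigcupP.
    by exists (code Hs rm (cm psi) (N r) (F r) (val u)); rewrite // inE hu eqxx.
  apply: leq_trans (subset_leq_card sub) _.
  apply: leq_trans (card_bigcup_le _ _) _.
  rewrite -sum_nat_const; apply: leq_sum => c' _.
  by rewrite leqNgt hall.
have [u1 hu1] : exists u, u \in cl c by apply/set0Pn; rewrite -card_gt0; lia.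
have clP : forall u, u \in cl c ->
    [/\ u \in X, u \in S, val u \notin Hs & code Hs rm (cm psi) (N r) (F r) (val u) = c].
  move=> u; rewrite !inE => /andP[/andP[hP hu] /eqP hcu]; split => //.
  exact: (subsetP hXS).
have [_ hS1' hH1' _] := clP _ hu1.
pose Q := [set u : ivert delta G | val u \in ball (eH Hs) T (val u1)].
have hQ : #|Q| <= N r.
  apply: leq_trans (hN _ hS1' hH1' T (leqnn _)).
  by apply: (inj_card (f := val)) => [|z]; [exact: val_inj| rewrite inE].
have [u2 hu2 hfar'] : exists2 u, u \in cl c & u \notin Q.
  apply/subsetPn; apply/negP => hsub.
  by have := leq_trans (subset_leq_card hsub) hQ; rewrite leqNgt hc.
have hfar : val u2 \notin ball (eH Hs) T (val u1) by move: hfar'; rewrite inE.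
have [hX1 hS1 hH1 hc1] := clP _ hu1.
have [hX2 hS2 hH2 hc2] := clP _ hu2.
set x1 := val u1 in hS1 hH1 hc1 hfar.
set x2 := val u2 in hS2 hH2 hc2 hfar.
have hne : u1 != u2.
  apply/negP => /eqP e; move: hfar; rewrite /x2 -e ball_center //.
apply: (negP (hX u1 u2 hX1 hX2 hne)).
have hrm : rm <= T by rewrite /T -addnS leq_addr.
have b1 := hN _ hS1 hH1 rm hrm.
have b2 := hN _ hS2 hH2 rm hrm.
have ecode : code Hs rm (cm psi) (N r) (F r) x1 = code Hs rm (cm psi) (N r) (F r) x2.
  by rewrite hc1 hc2.
have g1 := code_gmap b1 b2 hF ecode.
have g2 := code_gmap b2 b1 hF (esym ecode).
have heq : forall w : ivert delta G, val w \notin ball (eH Hs) rm x1 ->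
    val w \notin ball (eH Hs) rm x2 -> @iadj psi delta G u1 w = @iadj psi delta G u2 w.
  move=> w n1 n2; rewrite /iadj.
  have -> : (x1 != val w) by apply: contraNneq n1 => <-; apply: ball_center.
  have -> : (x2 != val w) by apply: contraNneq n2 => <-; apply: ball_center.
  rewrite /= /psi_at.
  apply: (sat_tau hH1 hH2 hfar g1 g2 (l := 0) (h := rm)).
  - by rewrite /rm muln_gt0 expn_gt0.
  - by [].
  - by rewrite subn0 /rm mulSn mul1n leq_addr.
  - by [].
  - move=> n hn; have : n < 2 by apply: (allP fvpsi).
    case: eqP => [_ _|/eqP n1' hn2].
    + rewrite /safe (negbTE n1) (negbTE n2) !orbT /=.
      rewrite tau3 //.
      * by apply: contra n1; apply: ball_mono.
      * by apply: contra n2; apply: ball_mono.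
    + have c0 : x1 \in ball (eH Hs) 0 x1 by apply: ball_center.
      have nx : x1 \notin ball (eH Hs) rm x2.
        apply/negP => hx; move: hfar.
        by rewrite (ball_mono (leq_trans (leq_addr _ _) (leqnSn _)) (ball_sym (@eH_sym G Hs) hx)).
      rewrite /safe c0 nx orbT /= (tau1 _ _ _ c0).
      have := gm_dist g1 (ball_mono (leq0n _) c0) (leq0n rm).
      by rewrite c0 ball0 eq_sym.
apply: leq_trans (_ : #|ball (eH Hs) rm x1 :|: ball (eH Hs) rm x2| <= N r + N r).
  apply: (inj_card (f := val)) => [|w]; first exact: val_inj.
  rewrite inE => hw; apply/negPn/negP; rewrite inE negb_or => /andP[n1 n2].
  move: hw; rewrite /nbh_in !inE (heq w n1 n2).
  by case: (w \in S); case: (@iadj psi delta G u2 w); rewrite /= ?andbF ?andbT.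
by apply: leq_trans (leq_card_setU _ _) _; apply: leq_add.
Qed.
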